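(* Let $p,q \geq 2$. Let $M_1, M_2 \subset \widetilde{\mathrm{Ein}}^{p,q}$ be two Minkowski patches with $M_1 \cap M_2 \neq \emptyset$. Then $\pi_{\mathbf{X}}(M_1 \cap M_2)$ is a connected component of $\pi_{\mathbf{X}}(M_1) \cap \pi_{\mathbf{X}}(M_2)$.
   Context: $\mathrm{Ein}^{p,q}$ is the set of isotropic lines of $\mathbb{R}^{p+1,q+1}$ with its induced conformal structure. $\widetilde{\mathrm{Ein}}^{p,q} \cong \mathbb{S}^p \times \mathbb{S}^q$ is the set of isotropic vectors of $\mathbb{R}^{p+1,q+1}$ of Euclidean norm $1$, and $\pi_{\mathbf{X}} : \widetilde{\mathrm{Ein}}^{p,q} \to \mathrm{Ein}^{p,q}$ the natural double (universal, since $\min(p,q)\ge2$) cover. For $x=[v]\in\mathrm{Ein}^{p,q}$, the Minkowski patch $M_x=\{[w]: B(v,w)\ne 0\}$; a Minkowski patch of $\widetilde{\mathrm{Ein}}^{p,q}$ is a connected component of $\pi_{\mathbf{X}}^{-1}(M_x)$ for some Minkowski patch $M_x$ of $\mathrm{Ein}^{p,q}$. *)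

(* Defs.v *)
From Stdlib Require Import Reals.
Open Scope R_scope.

(* Vectors of R^n are represented as functions nat -> R; only the
   coordinates 0..n-1 matter (points of Ein~ are required to vanish beyond). *)
Definition Vec := nat -> R.

Fixpoint rsum (f : nat -> R) (k : nat) : R :=
  match k with O => 0 | S k' => rsum f k' + f k' end.

Definition vneg (v : Vec) : Vec := fun i => - v i.

Definition Bform (p q : nat) (v w : Vec) : R :=
  rsum (fun i => if Nat.ltb i (S p) then v i * w i else - (v i * w i))
       (p + q + 2).

Definition enorm2 (p q : nat) (v : Vec) : R := rsum (fun i => v i * v i) (p + q + 2).
Definition edist (p q : nat) (v w : Vec) : R :=
  sqrt (rsum (fun i => (v i - w i) * (v i - w i)) (p + q + 2)).

Definition Etilde (p q : nat) (v : Vec) : Prop :=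
  (forall i, (p + q + 2 <= i)%nat -> v i = 0) /\
  Bform p q v v = 0 /\ enorm2 p q v = 1.

Definition openEt (p q : nat) (U : Vec -> Prop) : Prop :=
  forall w, Etilde p q w -> U w ->
    exists eps, 0 < eps /\
      forall w', Etilde p q w' -> edist p q w w' < eps -> U w'.

(* Subsets of Ein^{p,q} are represented by their preimages in Ein~ under
   pi_X (i.e. by (+-)-symmetric subsets of Ein~).  The topology of Ein is
   the quotient topology: U subset of Ein is open iff pi_X^{-1}(U) is open. *)
Definition symm (U : Vec -> Prop) : Prop := forall w, U w -> U (vneg w).
Definition openEin (p q : nat) (U : Vec -> Prop) : Prop := symm U /\ openEt p q U.

(* pi_X(A), given through its preimage pi_X^{-1}(pi_X(A)) in Ein~. *)
Definition piX (p q : nat) (A : Vec -> Prop) : Vec -> Prop :=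
  fun w => Etilde p q w /\ (A w \/ A (vneg w)).

Definition connected_in (X : Vec -> Prop) (Op : (Vec -> Prop) -> Prop)
  (A : Vec -> Prop) : Prop :=
  ~ exists U V, Op U /\ Op V /\
      (forall w, X w -> A w -> U w \/ V w) /\
      (forall w, X w -> A w -> U w -> V w -> False) /\
      (exists w, X w /\ A w /\ U w) /\ (exists w, X w /\ A w /\ V w).

Definition subset_in (X : Vec -> Prop) (A B : Vec -> Prop) : Prop :=
  forall w, X w -> A w -> B w.

Definition component_in (X : Vec -> Prop) (Op : (Vec -> Prop) -> Prop)
  (C Y : Vec -> Prop) : Prop :=
  subset_in X C Y /\ (exists w, X w /\ C w) /\ connected_in X Op C /\
  forall D, connected_in X Op D -> subset_in X C D -> subset_in X D Y ->
    subset_in X D C.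

(* Minkowski patch of Ein~: a connected component of pi_X^{-1}(M_x),
   where M_x = {[w] : B(v,w) <> 0} for x = [v] in Ein.  Here v ranges over
   Ein~ (every point of Ein has such a representative; the condition is
   scale invariant). *)
Definition MinkPatchT (p q : nat) (M : Vec -> Prop) : Prop :=
  (forall w, M w -> Etilde p q w) /\
  exists v, Etilde p q v /\
    component_in (Etilde p q) (openEt p q) M
      (fun w => Etilde p q w /\ Bform p q v w <> 0).

(* Main.v *)
Require Import Defs.
From Stdlib Require Import Reals.
From Stdlib Require Import Lra Lia FunctionalExtensionality Classical.
Open Scope R_scope.

Lemma rsum_ext f g k : (forall i, (i < k)%nat -> f i = g i) -> rsum f k = rsum g k.
Proof. induction k; simpl; intros H; auto. rewrite IHk by (intros; apply H; lia). rewrite H by lia; auto. Qed.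
Lemma rsum_plus f g k : rsum (fun i => f i + g i) k = rsum f k + rsum g k.
Proof. induction k; simpl; [lra|]. rewrite IHk; lra. Qed.
Lemma rsum_scal a f k : rsum (fun i => a * f i) k = a * rsum f k.
Proof. induction k; simpl; [lra|]. rewrite IHk; lra. Qed.
Lemma rsum_lin2 a b f g k : rsum (fun i => a * f i + b * g i) k = a * rsum f k + b * rsum g k.
Proof. rewrite rsum_plus, rsum_scal, rsum_scal; auto. Qed.
Lemma rsum_le f g k : (forall i, (i < k)%nat -> f i <= g i) -> rsum f k <= rsum g k.
Proof. induction k; simpl; intros H; [lra|]. assert (rsum f k <= rsum g k) by (apply IHk; intros; apply H; lia). specialize (H k ltac:(lia)); lra. Qed.
Lemma rsum_zero f k : (forall i, (i < k)%nat -> f i = 0) -> rsum f k = 0.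
Proof. intros H; rewrite (rsum_ext f (fun _ => 0)) by auto. induction k; simpl; [lra|]. rewrite IHk; try lra; intros; apply H; lia. Qed.
Lemma rsum_nonneg f k : (forall i, (i < k)%nat -> 0 <= f i) -> 0 <= rsum f k.
Proof. intros H. replace 0 with (rsum (fun _ => 0) k). apply rsum_le; auto. apply rsum_zero; auto. Qed.
Lemma rsum_term_le f k j : (forall i, (i < k)%nat -> 0 <= f i) -> (j < k)%nat -> f j <= rsum f k.
Proof. induction k; simpl; intros H Hj; [lia|]. assert (0 <= rsum f k) by (apply rsum_nonneg; intros; apply H; lia).
 destruct (Nat.eq_dec j k). subst; lra. assert (f j <= rsum f k) by (apply IHk; [intros; apply H; lia| lia]). specialize (H k ltac:(lia)); lra. Qed.
Lemma rsum_abs f k : Rabs (rsum f k) <= rsum (fun i => Rabs (f i)) k.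
Proof. induction k; simpl. rewrite Rabs_R0; lra. eapply Rle_trans. apply Rabs_triang. lra. Qed.

Definition sg (p : nat) (i : nat) : R := if Nat.ltb i (S p) then 1 else -1.
Definition vadd (x y : Vec) : Vec := fun i => x i + y i.
Definition vscal (a : R) (x : Vec) : Vec := fun i => a * x i.

Lemma B_sg p q x y : Bform p q x y = rsum (fun i => sg p i * (x i * y i)) (p+q+2).
Proof. unfold Bform. apply rsum_ext; intros; unfold sg; destruct (Nat.ltb i (S p)); ring. Qed.
Lemma B_sym p q x y : Bform p q x y = Bform p q y x.
Proof. rewrite !B_sg; apply rsum_ext; intros; ring. Qed.
Lemma B_addr p q x y z : Bform p q x (vadd y z) = Bform p q x y + Bform p q x z.
Proof. rewrite !B_sg, <- rsum_plus; apply rsum_ext; intros; unfold vadd; ring. Qed.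
Lemma B_scalr p q x a y : Bform p q x (vscal a y) = a * Bform p q x y.
Proof. rewrite !B_sg, <- rsum_scal; apply rsum_ext; intros; unfold vscal; ring. Qed.
Lemma B_addl p q x y z : Bform p q (vadd y z) x = Bform p q y x + Bform p q z x.
Proof. rewrite !(B_sym p q _ x); apply B_addr. Qed.
Lemma B_scall p q x a y : Bform p q (vscal a y) x = a * Bform p q y x.
Proof. rewrite !(B_sym p q _ x); apply B_scalr. Qed.
Lemma B_neg_l p q x y : Bform p q (vneg x) y = - Bform p q x y.
Proof. replace (vneg x) with (vscal (-1) x) by (extensionality i; unfold vneg, vscal; ring). rewrite B_scall; ring. Qed.
Lemma B_neg_r p q x y : Bform p q x (vneg y) = - Bform p q x y.
Proof. rewrite B_sym, B_neg_l, B_sym; auto. Qed.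

Ltac Bexp := repeat (first [rewrite B_addr | rewrite B_addl | rewrite B_scalr | rewrite B_scall]).

Lemma enorm2_nonneg p q x : 0 <= enorm2 p q x.
Proof. apply rsum_nonneg; intros; nra. Qed.
Lemma coord_le p q x i : (i < p+q+2)%nat -> x i * x i <= enorm2 p q x.
Proof. intros; apply (rsum_term_le (fun i => x i * x i)); auto; intros; nra. Qed.
Lemma coord_dist p q x y i : (i < p+q+2)%nat -> Rabs (x i - y i) <= edist p q x y.
Proof. intros H. unfold edist. rewrite <- sqrt_Rsqr_abs. apply sqrt_le_1_alt. unfold Rsqr.
 apply (rsum_term_le (fun i => (x i - y i) * (x i - y i))); auto; intros; cbv beta; apply Rle_0_sqr. Qed.
Lemma enorm2_zero p q x : enorm2 p q x <= 0 -> forall i, (i < p+q+2)%nat -> x i = 0.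
Proof. intros H i Hi. pose proof (coord_le p q x i Hi). nra. Qed.
Lemma enorm2_scal p q a x : enorm2 p q (vscal a x) = a * a * enorm2 p q x.
Proof. unfold enorm2. rewrite <- rsum_scal. apply rsum_ext; intros; unfold vscal; ring. Qed.

Definition Jv (p : nat) (v : Vec) : Vec := fun i => sg p i * v i.
Definition ip (p q : nat) (x y : Vec) : R := rsum (fun i => x i * y i) (p+q+2).
Definition Ps (p : nat) (s : bool) (x : Vec) : Vec := fun i => if Bool.eqb s (Nat.ltb i (S p)) then x i else 0.
Definition sgb (s : bool) : R := if s then 1 else -1.
Definition Eset p q v x := (forall i, (p+q+2 <= i)%nat -> x i = 0) /\ Bform p q v x = 0 /\ Bform p q (Jv p v) x = 0.
Definition phi p q v x := vadd (vadd x (Jv p v)) (vscal (- Bform p q x x / 2) v).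
Definition Nz p q (w : Vec) : Vec := vscal (/ sqrt (enorm2 p q w)) w.
Definition seg (x x' : Vec) (t : R) : Vec := vadd (vscal (1-t) x) (vscal t x').

Lemma sg2 p i : sg p i * sg p i = 1.
Proof. unfold sg; destruct (Nat.ltb i (S p)); ring. Qed.

Lemma Et_vv p q v : Etilde p q v -> Bform p q v v = 0.
Proof. intros [_ [H _]]; auto. Qed.
Lemma B_vJ p q v : Etilde p q v -> Bform p q v (Jv p v) = 1.
Proof. intros [_ [_ H]]. rewrite <- H, B_sg. apply rsum_ext; intros; unfold Jv.
 replace (sg p i * (v i * (sg p i * v i))) with ((sg p i * sg p i) * (v i * v i)) by ring. rewrite sg2; ring. Qed.
Lemma B_JJ p q v : Etilde p q v -> Bform p q (Jv p v) (Jv p v) = 0.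
Proof. intros H. rewrite <- (Et_vv p q v H), !B_sg. apply rsum_ext; intros; unfold Jv.
 replace (sg p i * (sg p i * v i * (sg p i * v i))) with ((sg p i * sg p i) * (sg p i * (v i * v i))) by ring. rewrite sg2; ring. Qed.

Lemma E_add p q v x y : Eset p q v x -> Eset p q v y -> Eset p q v (vadd x y).
Proof. intros [H1 [H2 H3]] [G1 [G2 G3]]. split; [|split].
 intros; unfold vadd; rewrite H1, G1 by auto; ring. all: Bexp; lra. Qed.
Lemma E_scal p q v a x : Eset p q v x -> Eset p q v (vscal a x).
Proof. intros [H1 [H2 H3]]. split; [|split].
 intros; unfold vscal; rewrite H1 by auto; ring. all: Bexp; nra. Qed.
Lemma E_seg p q v x y t : Eset p q v x -> Eset p q v y -> Eset p q v (seg x y t).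
Proof. intros; unfold seg; apply E_add; apply E_scal; auto. Qed.

Lemma B_v_phi p q v x : Etilde p q v -> Eset p q v x -> Bform p q v (phi p q v x) = 1.
Proof. intros Hv [_ [H2 H3]]. unfold phi; Bexp. rewrite H2, (B_vJ p q v Hv), (Et_vv p q v Hv). ring. Qed.

Ltac vfacts p q v Hv := let h1 := fresh in let h2 := fresh in let h3 := fresh in
  pose proof (B_vJ p q v Hv) as h1; pose proof (Et_vv p q v Hv) as h2; pose proof (B_JJ p q v Hv) as h3;
  rewrite ?(B_sym p q (Jv p v) v), ?h1, ?h2, ?h3.
Ltac efacts p q v x H2 H3 :=
  rewrite ?(B_sym p q x v), ?(B_sym p q x (Jv p v)), ?H2, ?H3.

Lemma B_phi_phi p q v x : Etilde p q v -> Eset p q v x -> Bform p q (phi p q v x) (phi p q v x) = 0.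
Proof. intros Hv [_ [H2 H3]]. unfold phi; Bexp. efacts p q v x H2 H3. vfacts p q v Hv. field. Qed.
Lemma B_phi2 p q v x x0 : Etilde p q v -> Eset p q v x -> Eset p q v x0 ->
  Bform p q (phi p q v x0) (phi p q v x) = - Bform p q (vadd x (vscal (-1) x0)) (vadd x (vscal (-1) x0)) / 2.
Proof. intros Hv [_ [H2 H3]] [_ [G2 G3]]. unfold phi; Bexp.
 efacts p q v x H2 H3. efacts p q v x0 G2 G3. vfacts p q v Hv. rewrite (B_sym p q x0 x). field. Qed.

Definition xo p q v z := vadd (vscal (/ Bform p q v z) z)
   (vadd (vscal (- Bform p q (Jv p v) z / Bform p q v z) v) (vscal (-1) (Jv p v))).

Lemma Jv_zero p q v : Etilde p q v -> forall i, (p+q+2 <= i)%nat -> Jv p v i = 0.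
Proof. intros [H _] i Hi; unfold Jv; rewrite H; auto; ring. Qed.

Lemma phi_xo p q v z : Etilde p q v -> (forall i, (p+q+2 <= i)%nat -> z i = 0) ->
  Bform p q z z = 0 -> Bform p q v z <> 0 ->
  Eset p q v (xo p q v z) /\ phi p q v (xo p q v z) = vscal (/ Bform p q v z) z.
Proof. intros Hv Hz Hzz Hb.
 assert (HE : Eset p q v (xo p q v z)).
 { split; [|split].
   - intros i Hi; unfold xo, vadd, vscal. rewrite Hz, (Jv_zero p q v Hv), (proj1 Hv) by auto; ring.
   - unfold xo; Bexp. vfacts p q v Hv. field; auto.
   - unfold xo; Bexp. vfacts p q v Hv. field; auto. }
 split; auto.
 assert (HB : Bform p q (xo p q v z) (xo p q v z) = - 2 * (Bform p q (Jv p v) z / Bform p q v z)).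
 { unfold xo; Bexp. rewrite ?(B_sym p q z v), ?(B_sym p q z (Jv p v)), ?Hzz. vfacts p q v Hv. field; auto. }
 unfold phi. rewrite HB. extensionality i. unfold xo, vadd, vscal. field; auto. Qed.

Lemma Ps_split p x : vadd (Ps p true x) (Ps p false x) = x.
Proof. extensionality i; unfold vadd, Ps; destruct (Nat.ltb i (S p)); simpl; ring. Qed.
Lemma Ps_add p s x y : Ps p s (vadd x y) = vadd (Ps p s x) (Ps p s y).
Proof. extensionality i; unfold vadd, Ps; destruct (Bool.eqb s (Nat.ltb i (S p))); ring. Qed.
Lemma Ps_scal p s a x : Ps p s (vscal a x) = vscal a (Ps p s x).
Proof. extensionality i; unfold vscal, Ps; destruct (Bool.eqb s (Nat.ltb i (S p))); ring. Qed.
Lemma Ps_idem p s x : Ps p s (Ps p s x) = Ps p s x.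
Proof. extensionality i; unfold Ps; destruct (Bool.eqb s (Nat.ltb i (S p))); ring. Qed.

Lemma B_Ps_cross p q s a b : Bform p q (Ps p s a) (Ps p (negb s) b) = 0.
Proof. rewrite B_sg; apply rsum_zero; intros; unfold Ps; destruct s, (Nat.ltb i (S p)); simpl; ring. Qed.
Lemma B_Ps_same p q s a b : Bform p q (Ps p s a) (Ps p s b) = sgb s * ip p q (Ps p s a) (Ps p s b).
Proof. rewrite B_sg; unfold ip; rewrite <- rsum_scal; apply rsum_ext; intros; unfold Ps, sg, sgb;
 destruct s, (Nat.ltb i (S p)); simpl; ring. Qed.
Lemma B_v_Ps p q s v z : Bform p q v (Ps p s z) = sgb s * ip p q (Ps p s v) z.
Proof. rewrite B_sg; unfold ip; rewrite <- rsum_scal; apply rsum_ext; intros; unfold Ps, sg, sgb;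
 destruct s, (Nat.ltb i (S p)); simpl; ring. Qed.
Lemma B_Jv_Ps p q s v z : Bform p q (Jv p v) (Ps p s z) = ip p q (Ps p s v) z.
Proof. rewrite B_sg; unfold ip; apply rsum_ext; intros; unfold Jv, Ps, sg;
 destruct s, (Nat.ltb i (S p)); simpl; ring. Qed.
Lemma B_v_Ps2 p q s v x : Bform p q v (Ps p s x) = (Bform p q v x + sgb s * Bform p q (Jv p v) x) / 2.
Proof. rewrite !B_sg.
 match goal with |- _ = (rsum ?G ?n + sgb s * rsum ?H _) / 2 =>
   transitivity (rsum (fun i => (/2) * G i + (sgb s / 2) * H i) n); [| rewrite rsum_lin2; field] end.
 apply rsum_ext; intros; unfold Jv, Ps, sg, sgb; destruct s, (Nat.ltb i (S p)); simpl; field. Qed.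
Lemma B_Jv_Ps2 p q s v x : Bform p q (Jv p v) (Ps p s x) = (Bform p q (Jv p v) x + sgb s * Bform p q v x) / 2.
Proof. rewrite !B_sg.
 match goal with |- _ = (rsum ?G ?n + sgb s * rsum ?H _) / 2 =>
   transitivity (rsum (fun i => (/2) * G i + (sgb s / 2) * H i) n); [| rewrite rsum_lin2; field] end.
 apply rsum_ext; intros; unfold Jv, Ps, sg, sgb; destruct s, (Nat.ltb i (S p)); simpl; field. Qed.
Lemma E_Ps p q v s x : Eset p q v x -> Eset p q v (Ps p s x).
Proof. intros [H1 [H2 H3]]. split; [|split].
 - intros; unfold Ps; rewrite H1 by auto; destruct (Bool.eqb s (Nat.ltb i (S p))); auto.
 - rewrite B_v_Ps2, H2, H3; lra.
 - rewrite B_Jv_Ps2, H2, H3; lra. Qed.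

Lemma ip_sym p q x y : ip p q x y = ip p q y x.
Proof. unfold ip; apply rsum_ext; intros; ring. Qed.
Lemma ip_addr p q x y z : ip p q x (vadd y z) = ip p q x y + ip p q x z.
Proof. unfold ip; rewrite <- rsum_plus; apply rsum_ext; intros; unfold vadd; ring. Qed.
Lemma ip_scalr p q x a y : ip p q x (vscal a y) = a * ip p q x y.
Proof. unfold ip; rewrite <- rsum_scal; apply rsum_ext; intros; unfold vscal; ring. Qed.
Lemma ip_addl p q x y z : ip p q (vadd y z) x = ip p q y x + ip p q z x.
Proof. rewrite !(ip_sym p q _ x); apply ip_addr. Qed.
Lemma ip_scall p q x a y : ip p q (vscal a y) x = a * ip p q y x.
Proof. rewrite !(ip_sym p q _ x); apply ip_scalr. Qed.
Ltac Iexp := repeat (first [rewrite ip_addr | rewrite ip_addl | rewrite ip_scalr | rewrite ip_scall]).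

Lemma sqrt_pos_lt e : 0 < e -> 0 < sqrt e.
Proof. intros; apply sqrt_lt_R0; auto. Qed.

Lemma Nz_Et p q w : (forall i, (p+q+2 <= i)%nat -> w i = 0) -> Bform p q w w = 0 -> 0 < enorm2 p q w ->
  Etilde p q (Nz p q w).
Proof. intros H1 H2 H3. pose proof (sqrt_pos_lt _ H3). split; [|split].
 - intros i Hi; unfold Nz, vscal; rewrite H1 by auto; ring.
 - unfold Nz; Bexp. rewrite H2; ring.
 - unfold Nz; rewrite enorm2_scal. rewrite <- (sqrt_sqrt (enorm2 p q w)) at 3 by lra. field; lra. Qed.
Lemma B_Nz p q u w : 0 < enorm2 p q w -> Bform p q u (Nz p q w) = / sqrt (enorm2 p q w) * Bform p q u w.
Proof. intros; unfold Nz; Bexp; auto. Qed.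
Lemma B_Nz_pos p q u w : 0 < enorm2 p q w -> 0 < Bform p q u w -> 0 < Bform p q u (Nz p q w).
Proof. intros H1 H2; rewrite B_Nz by auto. pose proof (sqrt_pos_lt _ H1). apply Rmult_lt_0_compat; auto. apply Rinv_0_lt_compat; auto. Qed.
Lemma Nz_scal p q a w : enorm2 p q w = 1 -> 0 < a -> Nz p q (vscal a w) = w.
Proof. intros H Ha. unfold Nz. rewrite enorm2_scal, H, Rmult_1_r, sqrt_square by lra.
 extensionality i; unfold vscal; field; lra. Qed.
Lemma enorm_pos_of_B p q v w : Bform p q v w <> 0 -> 0 < enorm2 p q w.
Proof. intros H. destruct (Rle_lt_dec (enorm2 p q w) 0) as [h|h]; auto. exfalso; apply H.
 rewrite B_sg; apply rsum_zero; intros. rewrite (enorm2_zero p q w h i) by auto; ring. Qed.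
Lemma phi_pos p q v x : Etilde p q v -> Eset p q v x -> 0 < enorm2 p q (phi p q v x).
Proof. intros; apply (enorm_pos_of_B p q v). rewrite B_v_phi; auto; lra. Qed.

Definition vcont (g : R -> Vec) := forall i, continuity (fun t => g t i).

Lemma rsum_cont (F : R -> nat -> R) k : (forall i, continuity (fun t => F t i)) -> continuity (fun t => rsum (F t) k).
Proof. intros H; induction k; simpl.
 - apply continuity_const; intros ? ?; auto.
 - apply (continuity_plus (fun t => rsum (F t) k) (fun t => F t k)); auto. Qed.

Lemma B_cont p q a b : vcont a -> vcont b -> continuity (fun t => Bform p q (a t) (b t)).
Proof. intros Ha Hb. unfold Bform. apply (rsum_cont (fun t i => if Nat.ltb i (S p) then a t i * b t i else - (a t i * b t i))).
 intros i; destruct (Nat.ltb i (S p)).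
 - apply (continuity_mult (fun t => a t i) (fun t => b t i)); auto.
 - apply (continuity_opp (fun t => a t i * b t i)). apply (continuity_mult (fun t => a t i) (fun t => b t i)); auto. Qed.
Lemma en_cont p q a : vcont a -> continuity (fun t => enorm2 p q (a t)).
Proof. intros Ha. unfold enorm2. apply (rsum_cont (fun t i => a t i * a t i)). intros i.
 apply (continuity_mult (fun t => a t i) (fun t => a t i)); auto. Qed.

Lemma Nz_cont p q g : vcont g -> (forall t, 0 < enorm2 p q (g t)) -> vcont (fun t => Nz p q (g t)).
Proof. intros Hg Hp i t. unfold Nz, vscal.
 apply (continuity_pt_mult (fun t => / sqrt (enorm2 p q (g t))) (fun t => g t i)); [| apply Hg].
 apply (continuity_pt_inv (fun t => sqrt (enorm2 p q (g t)))).
 - apply (continuity_pt_comp (fun t => enorm2 p q (g t)) sqrt). apply en_cont; auto. apply continuity_pt_sqrt. left; auto.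
 - pose proof (sqrt_pos_lt _ (Hp t)); lra. Qed.

Lemma phi_seg_cont p q v x x' : vcont (fun t => phi p q v (seg x x' t)).
Proof. assert (Hs : vcont (fun t => seg x x' t)) by (intros i; unfold seg, vadd, vscal; reg).
 intros i. unfold phi, vadd, vscal.
 apply (continuity_plus (fun t => seg x x' t i + Jv p v i) (fun t => - Bform p q (seg x x' t) (seg x x' t) / 2 * v i)).
 - apply (continuity_plus (fun t => seg x x' t i) (fun t => Jv p v i)); auto. apply continuity_const; intros ? ?; auto.
 - apply (continuity_mult (fun t => - Bform p q (seg x x' t) (seg x x' t) / 2) (fun t => v i)).
   + unfold Rdiv. apply (continuity_mult (fun t => - Bform p q (seg x x' t) (seg x x' t)) (fun t => / 2)).
     apply (continuity_opp (fun t => Bform p q (seg x x' t) (seg x x' t))). apply B_cont; auto.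
     apply continuity_const; intros ? ?; auto.
   + apply continuity_const; intros ? ?; auto. Qed.

Lemma vcont_edist p q g : vcont g -> forall t eps, 0 < eps -> exists d, 0 < d /\
   forall s, Rabs (s - t) < d -> edist p q (g t) (g s) < eps.
Proof. intros Hg t eps He.
 set (h := fun s => rsum (fun i => (g t i - g s i) * (g t i - g s i)) (p+q+2)).
 assert (Hc : continuity h).
 { unfold h. apply (rsum_cont (fun s i => (g t i - g s i) * (g t i - g s i))). intros i.
   apply (continuity_mult (fun s => g t i - g s i) (fun s => g t i - g s i));
   apply (continuity_minus (fun s => g t i) (fun s => g s i)); auto; apply continuity_const; intros ? ?; auto. }
 assert (h0 : h t = 0) by (unfold h; apply rsum_zero; intros; ring).
 assert (He2 : eps * eps > 0) by nra. destruct (Hc t (eps * eps) He2) as [d [Hd H]].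
 exists d; split; auto. intros s Hs.
 assert (Hh : h s < eps * eps).
 { destruct (Req_dec s t). subst; lra.
   specialize (H s (conj (conj I (not_eq_sym H0)) Hs)). simpl in H. unfold R_dist in H. rewrite h0 in H.
   rewrite Rminus_0_r in H. apply Rabs_def2 in H; lra. }
 assert (0 <= h s) by (unfold h; apply rsum_nonneg; intros; cbv beta; apply Rle_0_sqr).
 unfold edist. fold (h s). rewrite <- (sqrt_square eps) by lra. apply sqrt_lt_1_alt; lra. Qed.

Lemma path_sep p q (U V : Vec -> Prop) (g : R -> Vec) :
  openEt p q U -> openEt p q V -> vcont g ->
  (forall t, 0 <= t <= 1 -> Etilde p q (g t) /\ (U (g t) \/ V (g t)) /\ ~ (U (g t) /\ V (g t))) ->
  U (g 0) -> U (g 1).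
Proof. intros HU HV Hg Hpt H0.
 set (E := fun t => 0 <= t <= 1 /\ forall s, 0 <= s <= t -> U (g s)).
 assert (HE0 : E 0). { split; [lra|]. intros s Hs; replace s with 0 by lra; auto. }
 assert (Hb : bound E). { exists 1; intros x [Hx _]; lra. }
 destruct (completeness E Hb (ex_intro _ 0 HE0)) as [T [Hub Hlub]].
 assert (T0 : 0 <= T) by (apply Hub; auto).
 assert (T1 : T <= 1) by (apply Hlub; intros x [Hx _]; lra).
 assert (Key : forall s, 0 <= s < T -> U (g s)).
 { intros s Hs. destruct (classic (exists e, E e /\ s < e)) as [[e [[He1 He2] Hse]]|Hn].
   - apply He2; lra.
   - exfalso. assert (T <= s); [|lra]. apply Hlub. intros x Hx.
     destruct (Rle_lt_dec x s); auto. exfalso; apply Hn; eauto. }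
 assert (UT : U (g T)).
 { destruct (Hpt T (conj T0 T1)) as [HET [[Hu|Hv] Hd]]; auto. exfalso.
   destruct (HV (g T) HET Hv) as [eps [Heps Heps']].
   destruct (vcont_edist p q g Hg T eps Heps) as [d [Hd0 Hd1]].
   destruct (Req_dec T 0) as [HT|HT].
   - subst T. apply Hd; auto.
   - set (s := Rmax 0 (T - d/2)).
     assert (Hs1 : 0 <= s < T) by (unfold s; unfold Rmax; destruct (Rle_dec 0 (T - d/2)); lra).
     assert (Hs2 : Rabs (s - T) < d) by (unfold s; unfold Rmax; destruct (Rle_dec 0 (T - d/2)); apply Rabs_def1; lra).
     destruct (Hpt s ltac:(lra)) as [HEs [_ Hds]]. apply Hds. split. apply Key; auto. apply Heps'; auto. }
 assert (ET : E T). { split; [lra|]. intros s Hs. destruct (Req_dec s T). subst; auto. apply Key; lra. }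
 destruct (Req_dec T 1) as [HT|HT].
 - subst T. apply (proj2 ET); lra.
 - exfalso. destruct (Hpt T (conj T0 T1)) as [HET _].
   destruct (HU (g T) HET UT) as [eps [Heps Heps']].
   destruct (vcont_edist p q g Hg T eps Heps) as [d [Hd0 Hd1]].
   set (s' := Rmin 1 (T + d/2)).
   assert (Hs' : T < s' <= 1) by (unfold s', Rmin; destruct (Rle_dec 1 (T + d/2)); lra).
   assert (E s').
   { split; [lra|]. intros s Hs. destruct (Rle_lt_dec s T). apply (proj2 ET); lra.
     destruct (Hpt s ltac:(lra)) as [HEs _]. apply Heps'; auto. apply Hd1.
     unfold s', Rmin in Hs; destruct (Rle_dec 1 (T + d/2)); apply Rabs_def1; lra. }
   assert (s' <= T) by (apply Hub; auto). lra. Qed.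

Lemma rsum_one N : rsum (fun _ => 1) N = INR N.
Proof. induction N; simpl rsum; [simpl; lra|]. rewrite IHN, S_INR; lra. Qed.
Lemma count_lt m r : rsum (fun k => if Nat.ltb k m then 1 else 0) (m + r) = INR m.
Proof. assert (H : forall j, (j <= m)%nat -> rsum (fun k => if Nat.ltb k m then 1 else 0) j = INR j).
 { induction j; intros Hj; simpl rsum. simpl; lra. rewrite IHj by lia.
   replace (Nat.ltb j m) with true by (symmetry; apply Nat.ltb_lt; lia). rewrite S_INR; lra. }
 induction r. rewrite Nat.add_0_r; apply H; lia.
 replace (m + S r)%nat with (S (m + r)) by lia. simpl rsum. rewrite IHr.
 replace (Nat.ltb (m + r) m) with false by (symmetry; apply Nat.ltb_ge; lia). lra. Qed.

Definition ind p (s : bool) (k : nat) : R := if Bool.eqb s (Nat.ltb k (S p)) then 1 else 0.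
Lemma count_side p q s : (2 <= p)%nat -> (2 <= q)%nat -> 3 <= rsum (ind p s) (p+q+2).
Proof. intros Hp Hq. replace (p+q+2)%nat with (S p + S q)%nat by lia.
 assert (Ht : rsum (ind p true) (S p + S q) = INR (S p)).
 { rewrite <- (count_lt (S p) (S q)). apply rsum_ext; intros; unfold ind; destruct (Nat.ltb i (S p)); auto. }
 assert (H3 : 3 <= INR (S p)) by (replace 3 with (INR 3) by (simpl; lra); apply le_INR; lia).
 assert (H3' : 3 <= INR (S q)) by (replace 3 with (INR 3) by (simpl; lra); apply le_INR; lia).
 destruct s; [lra|].
 assert (rsum (ind p false) (S p + S q) = rsum (fun _ => 1) (S p + S q) + (-1) * rsum (ind p true) (S p + S q)).
 { rewrite <- (Rmult_1_l (rsum (fun _ => 1) _)), <- rsum_lin2. apply rsum_ext; intros; unfold ind; destruct (Nat.ltb i (S p)); simpl; ring. }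
 rewrite H, Ht, rsum_one, plus_INR. lra. Qed.

Definition ek (k : nat) : Vec := fun i => if Nat.eqb i k then 1 else 0.
Lemma ip_ek p q k a : (k < p+q+2)%nat -> ip p q (ek k) a = a k.
Proof. unfold ip. generalize (p+q+2)%nat. intros N; induction N; intros Hk; [lia|]. simpl rsum.
 destruct (Nat.eq_dec k N).
 - subst. rewrite rsum_zero. unfold ek; rewrite Nat.eqb_refl; ring.
   intros i Hi; unfold ek; replace (Nat.eqb i N) with false by (symmetry; apply Nat.eqb_neq; lia); ring.
 - rewrite IHN by lia. unfold ek; replace (Nat.eqb N k) with false by (symmetry; apply Nat.eqb_neq; lia); ring. Qed.

Lemma third_vec p q s a b : (2 <= p)%nat -> (2 <= q)%nat ->
  Ps p s a = a -> Ps p s b = b ->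
  (forall i, (p+q+2 <= i)%nat -> a i = 0) -> (forall i, (p+q+2 <= i)%nat -> b i = 0) ->
  0 < ip p q a a -> 0 < ip p q b b -> ip p q a b = 0 ->
  exists z, Ps p s z = z /\ (forall i, (p+q+2 <= i)%nat -> z i = 0) /\ 0 < ip p q z z /\
     ip p q z a = 0 /\ ip p q z b = 0.
Proof. intros Hp Hq Ha Hb Ha0 Hb0 Haa Hbb Hab.
 set (Ia := ip p q a a) in *. set (Ib := ip p q b b) in *.
 set (ga := fun k => / Ia * (a k * a k) + / Ib * (b k * b k)).
 assert (Hsum : rsum ga (p+q+2) = 2). { unfold ga; rewrite rsum_lin2. change (rsum (fun i => a i * a i) (p+q+2)) with Ia. change (rsum (fun i => b i * b i) (p+q+2)) with Ib. field; split; lra. }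
 assert (Hoff : forall i, Bool.eqb s (Nat.ltb i (S p)) = false -> a i = 0 /\ b i = 0).
 { intros i Hi. rewrite <- Ha, <- Hb. unfold Ps. rewrite Hi. auto. }
 assert (Hk : exists k, (k < p+q+2)%nat /\ Bool.eqb s (Nat.ltb k (S p)) = true /\ ga k < 1).
 { apply NNPP; intros Hn. assert (rsum (ind p s) (p+q+2) <= rsum ga (p+q+2)); [|pose proof (count_side p q s Hp Hq); lra].
   apply rsum_le; intros i Hi. unfold ind. destruct (Bool.eqb s (Nat.ltb i (S p))) eqn:E.
   - destruct (Rlt_le_dec (ga i) 1); auto. exfalso; apply Hn; eauto.
   - destruct (Hoff i E) as [h1 h2]. unfold ga; rewrite h1, h2; lra. }
 destruct Hk as [k [Hkn [Hks Hgk]]].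
 set (z := vadd (ek k) (vadd (vscal (- (a k / Ia)) a) (vscal (- (b k / Ib)) b))).
 assert (Hza : ip p q z a = 0).
 { unfold z; Iexp. rewrite ip_ek by auto. rewrite (ip_sym p q b a), Hab. fold Ia. field; lra. }
 assert (Hzb : ip p q z b = 0).
 { unfold z; Iexp. rewrite ip_ek by auto. rewrite Hab. fold Ib. field; lra. }
 exists z. split; [|split; [|split; [|split]]]; auto.
 - extensionality i. unfold Ps. destruct (Bool.eqb s (Nat.ltb i (S p))) eqn:E; auto.
   destruct (Hoff i E) as [h1 h2]. unfold z, vadd, vscal, ek. rewrite h1, h2.
   replace (Nat.eqb i k) with false. ring. symmetry; apply Nat.eqb_neq; intros ->; congruence.
 - intros i Hi. unfold z, vadd, vscal, ek. rewrite (Ha0 i Hi), (Hb0 i Hi).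
   replace (Nat.eqb i k) with false. ring. symmetry; apply Nat.eqb_neq; lia.
 - assert (Hzk : z k = 1 - ga k). { unfold z, vadd, vscal, ek, ga. rewrite Nat.eqb_refl. field; lra. }
   pose proof (coord_le p q z k Hkn). unfold enorm2 in H. fold (ip p q z z) in H. nra. Qed.

Lemma ip_Ps_v p q s v : Etilde p q v -> ip p q (Ps p s v) (Ps p s v) = / 2.
Proof. intros [_ [H1 H2]].
 assert (ip p q (Ps p s v) (Ps p s v) = / 2 * enorm2 p q v + (sgb s / 2) * Bform p q v v).
 { rewrite B_sg. unfold enorm2. rewrite <- rsum_lin2. unfold ip. apply rsum_ext; intros; unfold Ps, sg, sgb.
   destruct s, (Nat.ltb i (S p)); simpl; field. }
 rewrite H, H1, H2; ring. Qed.

Lemma seg0 x x' : seg x x' 0 = x.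
Proof. extensionality i; unfold seg, vadd, vscal; ring. Qed.
Lemma seg1 x x' : seg x x' 1 = x'.
Proof. extensionality i; unfold seg, vadd, vscal; ring. Qed.
Lemma seg_rev x x' t : seg x x' t = seg x' x (1 - t).
Proof. extensionality i; unfold seg, vadd, vscal; ring. Qed.

Lemma phi_zero p q v x : Etilde p q v -> Eset p q v x -> forall i, (p+q+2 <= i)%nat -> phi p q v x i = 0.
Proof. intros Hv [H1 _] i Hi. unfold phi, vadd, vscal. rewrite (H1 i Hi), (Jv_zero p q v Hv i Hi), (proj1 Hv i Hi). ring. Qed.

Definition Sset p q v u w := 0 < Bform p q v w /\ 0 < Bform p q u w.

Definition Sep p q (S U V : Vec -> Prop) := openEt p q U /\ openEt p q V /\
  (forall w, Etilde p q w -> S w -> U w \/ V w) /\ (forall w, Etilde p q w -> S w -> U w -> V w -> False).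

Definition Gm p q v x := Nz p q (phi p q v x).

Lemma link p q v u U V x x' : Etilde p q v -> Sep p q (Sset p q v u) U V ->
  Eset p q v x -> Eset p q v x' -> (forall t, 0 <= t <= 1 -> 0 < Bform p q u (phi p q v (seg x x' t))) ->
  U (Gm p q v x) -> U (Gm p q v x').
Proof. intros Hv [HU [HV [Hc Hd]]] Hx Hx' Ht H0.
 assert (HE : forall t, Eset p q v (seg x x' t)) by (intros; apply E_seg; auto).
 pose proof (path_sep p q U V (fun t => Gm p q v (seg x x' t)) HU HV) as HP.
 cbv beta in HP. rewrite seg0, seg1 in HP. apply HP; auto.
 - unfold Gm. apply Nz_cont. apply phi_seg_cont. intros; apply phi_pos; auto.
 - intros t Htt. assert (HEt : Etilde p q (Gm p q v (seg x x' t))).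
   { unfold Gm; apply Nz_Et. apply phi_zero; auto. apply B_phi_phi; auto. apply phi_pos; auto. }
   assert (HS : Sset p q v u (Gm p q v (seg x x' t))).
   { unfold Gm; split; apply B_Nz_pos; try apply phi_pos; auto. rewrite B_v_phi; auto; lra. }
   split; auto. split; auto. intros [h1 h2]; eapply Hd; eauto. Qed.

Lemma link_iff p q v u U V x x' : Etilde p q v -> Sep p q (Sset p q v u) U V ->
  Eset p q v x -> Eset p q v x' -> (forall t, 0 <= t <= 1 -> 0 < Bform p q u (phi p q v (seg x x' t))) ->
  (U (Gm p q v x) <-> U (Gm p q v x')).
Proof. intros. split. apply (link p q v u U V x x'); auto. apply (link p q v u U V x' x); auto. intros t Ht. rewrite seg_rev. apply H3; lra. Qed.

Lemma Bu_phi p q v u x : Bform p q u (phi p q v x) =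
  Bform p q u x + Bform p q u (Jv p v) - Bform p q x x / 2 * Bform p q u v.
Proof. unfold phi; Bexp. lra. Qed.

Lemma Ps_split' p s y : vadd (Ps p s y) (Ps p (negb s) y) = y.
Proof. extensionality i; unfold vadd, Ps; destruct s, (Nat.ltb i (S p)); simpl; ring. Qed.
Lemma Ps_seg p s a b t : Ps p s (seg a b t) = seg (Ps p s a) (Ps p s b) t.
Proof. extensionality i; unfold seg, vadd, vscal, Ps; destruct (Bool.eqb s (Nat.ltb i (S p))); ring. Qed.
Lemma sgb_neg s : sgb (negb s) = - sgb s.
Proof. destruct s; simpl; ring. Qed.
Lemma B_side p q s w : Ps p s w = w -> Bform p q w w = sgb s * ip p q w w.
Proof. intros H. rewrite <- H, B_Ps_same, H; auto. Qed.
Lemma ip_nonneg p q w : 0 <= ip p q w w.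
Proof. apply enorm2_nonneg. Qed.

Lemma stepA p q v K s y : Eset p q v y -> 0 < K * sgb s -> 0 < K * Bform p q y y ->
  forall t, 0 <= t <= 1 -> 0 < K * Bform p q (seg y (Ps p s y) t) (seg y (Ps p s y) t).
Proof. intros Hy Hk Hyy t Ht.
 set (z := Ps p s y). set (r := Ps p (negb s) y).
 assert (E1 : seg y z t = vadd z (vscal (1 - t) r)).
 { extensionality i; unfold z, r, seg, vadd, vscal, Ps; destruct s, (Nat.ltb i (S p)); simpl; ring. }
 assert (E2 : y = vadd z (vscal 1 r)).
 { extensionality i; unfold z, r, seg, vadd, vscal, Ps; destruct s, (Nat.ltb i (S p)); simpl; ring. }
 assert (Hc : Bform p q z r = 0) by apply B_Ps_cross.
 assert (Hc' : Bform p q r z = 0) by (rewrite B_sym; auto).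
 assert (Hr : K * Bform p q r r <= 0).
 { unfold r. rewrite B_Ps_same, sgb_neg. pose proof (ip_nonneg p q (Ps p (negb s) y)). nra. }
 assert (Hyy' : Bform p q (vadd z (vscal 1 r)) (vadd z (vscal 1 r)) = Bform p q z z + Bform p q r r).
 { Bexp. rewrite Hc, Hc'. lra. }
 rewrite E2, Hyy' in Hyy.
 rewrite E1. Bexp. rewrite Hc, Hc'.
 assert (0 <= (1-t)*(1-t) <= 1) by nra.
 assert (0 <= (1 - (1-t)*(1-t)) * (- (K * Bform p q r r))) by (apply Rmult_le_pos; lra). nra. Qed.

Lemma seg_side p s a b t : Ps p s a = a -> Ps p s b = b -> Ps p s (seg a b t) = seg a b t.
Proof. intros; rewrite Ps_seg; congruence. Qed.

Lemma seg_orth_pos p q a b t : 0 < ip p q a a -> 0 < ip p q b b -> ip p q a b = 0 -> 0 <= t <= 1 ->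
  0 < ip p q (seg a b t) (seg a b t).
Proof. intros Ha Hb Hab Ht. unfold seg; Iexp. rewrite ?(ip_sym p q b a), ?Hab.
 assert (0 <= t * (t * ip p q b b)) by (apply Rmult_le_pos; [lra| apply Rmult_le_pos; lra]).
 assert (0 <= (1-t) * ((1-t) * ip p q a a)) by (apply Rmult_le_pos; [lra| apply Rmult_le_pos; lra]).
 destruct (Rle_lt_dec t (1/2)).
 - assert (0 < (1-t) * ((1-t) * ip p q a a)) by (apply Rmult_lt_0_compat; [lra| apply Rmult_lt_0_compat; lra]). lra.
 - assert (0 < t * (t * ip p q b b)) by (apply Rmult_lt_0_compat; [lra| apply Rmult_lt_0_compat; lra]). lra. Qed.

Lemma stepB p q v K s (P : Vec -> Prop) z z' : (2 <= p)%nat -> (2 <= q)%nat -> Etilde p q v ->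
  0 < K * sgb s ->
  (forall y y', Eset p q v y -> Eset p q v y' ->
     (forall t, 0 <= t <= 1 -> 0 < K * Bform p q (seg y y' t) (seg y y' t)) -> (P y <-> P y')) ->
  Eset p q v z -> Eset p q v z' -> Ps p s z = z -> Ps p s z' = z' ->
  0 < K * Bform p q z z -> 0 < K * Bform p q z' z' -> (P z <-> P z').
Proof. intros Hp Hq Hv Hk LY Ez Ez' Sz Sz' Kz Kz'.
 assert (Kside : forall w, Ps p s w = w -> K * Bform p q w w = (K * sgb s) * ip p q w w).
 { intros w Hw; rewrite (B_side p q s w Hw); ring. }
 assert (Iz : 0 < ip p q z z). { rewrite Kside in Kz by auto. nra. }
 assert (Iz' : 0 < ip p q z' z'). { rewrite Kside in Kz' by auto. nra. }
 destruct (classic (forall t, 0 <= t <= 1 -> 0 < K * Bform p q (seg z z' t) (seg z z' t))) as [Hall|Hn].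
 { apply LY; auto. }
 apply not_all_ex_not in Hn. destruct Hn as [t0 Ht0].
 assert (Ht0' : 0 <= t0 <= 1 /\ K * Bform p q (seg z z' t0) (seg z z' t0) <= 0).
 { apply NNPP; intros Hc; apply Ht0; intros H; apply NNPP; intros Hc2; apply Hc; split; auto; lra. }
 destruct Ht0' as [Ht0a Ht0b].
 set (w0 := seg z z' t0) in *.
 assert (Sw0 : Ps p s w0 = w0) by (apply seg_side; auto).
 rewrite Kside in Ht0b by auto.
 assert (Iw0 : ip p q w0 w0 <= 0) by nra.
 assert (Zw0 : forall i, (i < p+q+2)%nat -> w0 i = 0) by (apply enorm2_zero; auto).
 assert (Hva : forall i, (p+q+2 <= i)%nat -> Ps p s v i = 0).
 { intros i Hi; unfold Ps; rewrite (proj1 Hv i Hi); destruct (Bool.eqb s (Nat.ltb i (S p))); auto. }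
 assert (Hab : ip p q (Ps p s v) z = 0).
 { rewrite <- B_Jv_Ps, Sz. apply (proj2 (proj2 Ez)). }
 destruct (third_vec p q s (Ps p s v) z Hp Hq (Ps_idem p s v) Sz Hva (proj1 Ez))
   as [zeta [Sze [Zze [Ize [Hza Hzb]]]]].
 - rewrite ip_Ps_v; auto; lra.
 - auto.
 - auto.
 - assert (Hzz' : ip p q zeta z' = 0).
   { assert (H0 : ip p q zeta w0 = 0) by (unfold ip; apply rsum_zero; intros; rewrite Zw0 by auto; ring).
     unfold w0, seg in H0. rewrite ip_addr, !ip_scalr, Hzb in H0.
     destruct (Req_dec t0 0) as [e|e].
     - exfalso. unfold w0 in Iw0; rewrite e, seg0 in Iw0; lra.
     - assert (t0 * ip p q zeta z' = 0) by lra. apply Rmult_integral in H. destruct H; [contradiction|auto]. }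
   assert (Ezeta : Eset p q v zeta).
   { split; [|split]; auto.
     - rewrite <- Sze, B_v_Ps, ip_sym, Hza. ring.
     - rewrite <- Sze, B_Jv_Ps, ip_sym, Hza. ring. }
   assert (Kzeta : forall a, Ps p s a = a -> 0 < ip p q a a -> ip p q a zeta = 0 ->
       forall t, 0 <= t <= 1 -> 0 < K * Bform p q (seg a zeta t) (seg a zeta t)).
   { intros a Sa Ia Haz t Ht. rewrite Kside by (apply seg_side; auto).
     apply Rmult_lt_0_compat; auto. apply seg_orth_pos; auto. }
   transitivity (P zeta).
   + apply LY; auto. apply Kzeta; auto. rewrite ip_sym; auto.
   + symmetry. apply LY; auto. apply Kzeta; auto. rewrite ip_sym; auto. Qed.

Lemma chainY p q v K s (P : Vec -> Prop) y y' : (2 <= p)%nat -> (2 <= q)%nat -> Etilde p q v ->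
  0 < K * sgb s ->
  (forall y y', Eset p q v y -> Eset p q v y' ->
     (forall t, 0 <= t <= 1 -> 0 < K * Bform p q (seg y y' t) (seg y y' t)) -> (P y <-> P y')) ->
  Eset p q v y -> Eset p q v y' -> 0 < K * Bform p q y y -> 0 < K * Bform p q y' y' -> (P y <-> P y').
Proof. intros Hp Hq Hv Hk LY Ey Ey' Ky Ky'.
 assert (A : forall y, Eset p q v y -> 0 < K * Bform p q y y ->
    (P y <-> P (Ps p s y)) /\ 0 < K * Bform p q (Ps p s y) (Ps p s y)).
 { intros x Ex Kx. split.
   - apply LY; auto. apply E_Ps; auto. intros; apply (stepA p q v); auto.
   - pose proof (stepA p q v K s x Ex Hk Kx 1 ltac:(lra)). rewrite seg1 in H; auto. }
 destruct (A y Ey Ky) as [A1 A2]. destruct (A y' Ey' Ky') as [A1' A2'].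
 rewrite A1, A1'. apply (stepB p q v K s); auto using E_Ps, Ps_idem. Qed.

Lemma conv_pos A B t : 0 < A -> 0 < B -> 0 <= t <= 1 -> 0 < (1 - t) * A + t * B.
Proof. intros. destruct (Rle_lt_dec t (1/2)).
 - assert (0 < (1-t) * A) by (apply Rmult_lt_0_compat; lra). assert (0 <= t * B) by (apply Rmult_le_pos; lra). lra.
 - assert (0 <= (1-t) * A) by (apply Rmult_le_pos; lra). assert (0 < t * B) by (apply Rmult_lt_0_compat; lra). lra. Qed.

Lemma Gm_xo p q v w : Etilde p q v -> Etilde p q w -> 0 < Bform p q v w ->
  Eset p q v (xo p q v w) /\ Gm p q v (xo p q v w) = w /\ phi p q v (xo p q v w) = vscal (/ Bform p q v w) w.
Proof. intros Hv Hw Hb. destruct Hw as [Hw1 [Hw2 Hw3]].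
 destruct (phi_xo p q v w Hv Hw1 Hw2 ltac:(lra)) as [HE Hp]. split; auto. split; auto.
 unfold Gm. rewrite Hp. apply Nz_scal; auto. apply Rinv_0_lt_compat; auto. Qed.

Lemma conn_S p q v u : (2 <= p)%nat -> (2 <= q)%nat -> Etilde p q v -> Etilde p q u ->
  connected_in (Etilde p q) (openEt p q) (Sset p q v u).
Proof. intros Hp Hq Hv Hu [U [V [HU [HV [Hcov [Hdis [[w [Ew [Sw Uw]]] [w' [Ew' [Sw' Vw']]]]]]]]]].
 assert (Hsep : Sep p q (Sset p q v u) U V) by (repeat split; auto).
 destruct (Gm_xo p q v w Hv Ew (proj1 Sw)) as [Ex [Gx Px]].
 destruct (Gm_xo p q v w' Hv Ew' (proj1 Sw')) as [Ex' [Gx' Px']].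
 set (x := xo p q v w) in *. set (x' := xo p q v w') in *.
 assert (Bx : 0 < Bform p q u (phi p q v x)).
 { rewrite Px; Bexp. apply Rmult_lt_0_compat. apply Rinv_0_lt_compat; apply Sw. apply Sw. }
 assert (Bx' : 0 < Bform p q u (phi p q v x')).
 { rewrite Px'; Bexp. apply Rmult_lt_0_compat. apply Rinv_0_lt_compat; apply Sw'. apply Sw'. }
 enough (U (Gm p q v x) <-> U (Gm p q v x')) as Hiff.
 { rewrite Gx, Gx' in Hiff. apply (Hdis w' Ew' Sw'); auto. apply Hiff; auto. }
 destruct (Req_dec (Bform p q u v) 0) as [Hc|Hc].
 - apply (link_iff p q v u U V); auto. intros t Ht.
   assert (Hl : forall y, Bform p q u (phi p q v y) = Bform p q u y + Bform p q u (Jv p v)).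
   { intros y; rewrite Bu_phi, Hc; ring. }
   rewrite Hl. rewrite Hl in Bx, Bx'. unfold seg; Bexp.
   replace ((1 - t) * Bform p q u x + t * Bform p q u x' + Bform p q u (Jv p v))
     with ((1 - t) * (Bform p q u x + Bform p q u (Jv p v)) + t * (Bform p q u x' + Bform p q u (Jv p v))) by ring.
   apply conv_pos; auto.
 - destruct Hu as [Hu1 [Hu2 Hu3]].
   assert (Hvu : Bform p q v u <> 0) by (rewrite B_sym; auto).
   destruct (phi_xo p q v u Hv Hu1 Hu2 Hvu) as [E0 P0].
   set (x0 := xo p q v u) in *.
   set (K := - Bform p q v u / 2).
   assert (Ue : u = vscal (Bform p q v u) (phi p q v x0)).
   { rewrite P0. extensionality i; unfold vscal; field; auto. }
   assert (HK : forall x, Eset p q v x -> Bform p q u (phi p q v x) =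
       K * Bform p q (vadd x (vscal (-1) x0)) (vadd x (vscal (-1) x0))).
   { intros y Ey. rewrite Ue at 1. rewrite B_scall, B_phi2; auto. unfold K; field. }
   set (P := fun y => U (Gm p q v (vadd x0 y))).
   assert (LY : forall y y', Eset p q v y -> Eset p q v y' ->
     (forall t, 0 <= t <= 1 -> 0 < K * Bform p q (seg y y' t) (seg y y' t)) -> (P y <-> P y')).
   { intros y y' Ey Ey' Ht. unfold P. apply (link_iff p q v u U V); auto using E_add.
     intros t Htt. rewrite HK by (apply E_seg; apply E_add; auto).
     replace (vadd (seg (vadd x0 y) (vadd x0 y') t) (vscal (-1) x0)) with (seg y y' t).
     apply Ht; auto. extensionality i; unfold seg, vadd, vscal; ring. }
   assert (Hs : exists s, 0 < K * sgb s).
   { destruct (Rlt_le_dec 0 K). exists true; simpl; lra.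
     exists false; simpl. assert (K <> 0) by (unfold K; lra). assert (K < 0) by lra. lra. }
   destruct Hs as [s Hs].
   set (y := vadd x (vscal (-1) x0)). set (y' := vadd x' (vscal (-1) x0)).
   assert (Hy : vadd x0 y = x) by (extensionality i; unfold y, vadd, vscal; ring).
   assert (Hy' : vadd x0 y' = x') by (extensionality i; unfold y', vadd, vscal; ring).
   pose proof (chainY p q v K s P y y' Hp Hq Hv Hs LY) as HC.
   unfold P in HC. rewrite Hy, Hy' in HC. apply HC.
   + unfold y; apply E_add; auto; apply E_scal; auto.
   + unfold y'; apply E_add; auto; apply E_scal; auto.
   + unfold y; rewrite <- HK; auto.
   + unfold y'; rewrite <- HK; auto. Qed.

Definition Kv p q (v : Vec) := rsum (fun i => Rabs (v i)) (p+q+2).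

Lemma B_lip p q v w w' : Rabs (Bform p q v w - Bform p q v w') <= Kv p q v * edist p q w w'.
Proof. rewrite !B_sg.
 replace (rsum (fun i => sg p i * (v i * w i)) (p+q+2) - rsum (fun i => sg p i * (v i * w' i)) (p+q+2))
   with (rsum (fun i => sg p i * (v i * (w i - w' i))) (p+q+2)).
 2:{ rewrite <- (Rmult_1_l (rsum (fun i => sg p i * (v i * w i)) _)).
     replace (1 * rsum (fun i => sg p i * (v i * w i)) (p+q+2) - rsum (fun i => sg p i * (v i * w' i)) (p+q+2))
       with (1 * rsum (fun i => sg p i * (v i * w i)) (p+q+2) + (-1) * rsum (fun i => sg p i * (v i * w' i)) (p+q+2)) by ring.
     rewrite <- rsum_lin2. apply rsum_ext; intros; ring. }
 eapply Rle_trans. apply rsum_abs. unfold Kv. rewrite Rmult_comm, <- rsum_scal.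
 apply rsum_le; intros i Hi. rewrite !Rabs_mult.
 assert (Rabs (sg p i) = 1) by (unfold sg; destruct (Nat.ltb i (S p)); unfold Rabs; destruct (Rcase_abs _); lra).
 rewrite H. pose proof (coord_dist p q w w' i Hi). pose proof (Rabs_pos (v i)). nra. Qed.

Lemma Kv_nonneg p q v : 0 <= Kv p q v.
Proof. apply rsum_nonneg; intros; apply Rabs_pos. Qed.

Lemma open_sign p q v w : Bform p q v w <> 0 -> exists eps, 0 < eps /\
  forall w', edist p q w w' < eps -> 0 < Bform p q v w * Bform p q v w'.
Proof. intros H. pose proof (Kv_nonneg p q v). set (b := Rabs (Bform p q v w)).
 assert (Hb : 0 < b) by (apply Rabs_pos_lt; auto).
 exists (b / (Kv p q v + 1)). split. apply Rdiv_lt_0_compat; lra.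
 intros w' Hw'. pose proof (B_lip p q v w w').
 assert (Kv p q v * edist p q w w' < b).
 { assert (Kv p q v * edist p q w w' <= Kv p q v * (b / (Kv p q v + 1))) by (apply Rmult_le_compat_l; lra).
   assert (Kv p q v * (b / (Kv p q v + 1)) < b). { apply (Rmult_lt_reg_r (Kv p q v + 1)). lra. field_simplify; lra. }
   lra. }
 assert (Hd : Rabs (Bform p q v w - Bform p q v w') < b) by lra.
 unfold b in *. apply Rabs_def2 in Hd. destruct Hd as [Hd1 Hd2].
 destruct (Rcase_abs (Bform p q v w)) as [h|h].
 - rewrite Rabs_left in * by auto. nra.
 - rewrite Rabs_right in * by auto. nra. Qed.

Lemma Et_neg p q w : Etilde p q w -> Etilde p q (vneg w).
Proof. intros [H1 [H2 H3]]. split; [|split].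
 - intros i Hi; unfold vneg; rewrite H1; auto; ring.
 - rewrite B_neg_l, B_neg_r, H2; ring.
 - rewrite <- H3; unfold enorm2; apply rsum_ext; intros; unfold vneg; ring. Qed.
Lemma vneg_vneg w : vneg (vneg w) = w.
Proof. extensionality i; unfold vneg; ring. Qed.

Lemma open_prod p q v1 v2 : openEt p q (fun w => Etilde p q w /\ 0 < Bform p q v1 w * Bform p q v2 w).
Proof. intros w Ew [_ Hw].
 assert (h1 : Bform p q v1 w <> 0) by (intro e; rewrite e in Hw; lra).
 assert (h2 : Bform p q v2 w <> 0) by (intro e; rewrite e in Hw; lra).
 destruct (open_sign p q v1 w h1) as [e1 [He1 H1]]. destruct (open_sign p q v2 w h2) as [e2 [He2 H2]].
 exists (Rmin e1 e2). split. apply Rmin_pos; auto.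
 intros w' Ew' Hd. split; auto.
 assert (A : 0 < Bform p q v1 w * Bform p q v1 w') by (apply H1; pose proof (Rmin_l e1 e2); lra).
 assert (B : 0 < Bform p q v2 w * Bform p q v2 w') by (apply H2; pose proof (Rmin_r e1 e2); lra).
 assert (C : 0 < (Bform p q v1 w * Bform p q v1 w') * (Bform p q v2 w * Bform p q v2 w')) by (apply Rmult_lt_0_compat; auto).
 replace ((Bform p q v1 w * Bform p q v1 w') * (Bform p q v2 w * Bform p q v2 w'))
   with ((Bform p q v1 w * Bform p q v2 w) * (Bform p q v1 w' * Bform p q v2 w')) in C by ring.
 destruct (Rlt_le_dec 0 (Bform p q v1 w' * Bform p q v2 w')); auto.
 nra. Qed.

Lemma openEt_ext p q (U U' : Vec -> Prop) : (forall w, U w <-> U' w) -> openEt p q U -> openEt p q U'.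
Proof. intros He HU w Ew Uw. apply He in Uw. destruct (HU w Ew Uw) as [e [He0 H]]. exists e; split; auto.
 intros; apply He; auto. Qed.

Lemma open_prod_neg p q v1 v2 : openEt p q (fun w => Etilde p q w /\ Bform p q v1 w * Bform p q v2 w < 0).
Proof. apply (openEt_ext p q (fun w => Etilde p q w /\ 0 < Bform p q (vneg v1) w * Bform p q v2 w)).
 intros w; rewrite B_neg_l. split; intros [a b]; split; auto; lra. apply open_prod. Qed.

Lemma patch_char p q M : (2 <= p)%nat -> (2 <= q)%nat -> MinkPatchT p q M ->
  exists v, Etilde p q v /\ forall w, Etilde p q w -> (M w <-> 0 < Bform p q v w).
Proof. intros Hp Hq [HM [v0 [Hv0 [Hsub [[w0 [Ew0 Mw0]] [Hconn Hmax]]]]]].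
 assert (Hw0 : Bform p q v0 w0 <> 0) by (apply (Hsub w0 Ew0 Mw0)).
 assert (Hv : exists v, Etilde p q v /\ 0 < Bform p q v w0 /\ forall w, (Bform p q v0 w <> 0 <-> Bform p q v w <> 0)).
 { destruct (Rlt_le_dec 0 (Bform p q v0 w0)).
   - exists v0; split; [auto|split; [auto| intros; tauto]].
   - exists (vneg v0). split. apply Et_neg; auto. rewrite B_neg_l. split. lra.
     intros w; rewrite B_neg_l; split; intros h e; apply h; lra. }
 destruct Hv as [v [Hv [Hvw0 Hvv]]]. exists v; split; auto.
 assert (C1 : forall w, Etilde p q w -> M w -> 0 < Bform p q v w).
 { intros w1 Ew1 Mw1. apply NNPP; intros Hn. apply Hconn.
   exists (fun w => 0 < Bform p q v w), (fun w => Bform p q v w < 0). split; [|split; [|split; [|split; [|split]]]].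
   - intros w Ew Uw. destruct (open_sign p q v w ltac:(lra)) as [e [He H]]. exists e; split; auto.
     intros w' _ Hd. specialize (H w' Hd). nra.
   - intros w Ew Uw. destruct (open_sign p q v w ltac:(lra)) as [e [He H]]. exists e; split; auto.
     intros w' _ Hd. specialize (H w' Hd). nra.
   - intros w Ew Mw. destruct (Hsub w Ew Mw) as [_ h]. apply Hvv in h. lra.
   - intros; lra.
   - exists w0; auto.
   - exists w1; split; [auto| split; [auto|]]. destruct (Hsub w1 Ew1 Mw1) as [_ h]. apply Hvv in h. apply Rnot_lt_le in Hn. lra. }
 intros w Ew; split; [apply C1; auto|]. intros Hw.
 apply (Hmax (Sset p q v v)); auto.
 - apply conn_S; auto.
 - intros x Ex Mx; split; apply C1; auto.
 - intros x Ex [Sx _]. split; auto. apply Hvv; lra.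
 - split; auto. Qed.

Theorem mainTheorem5 (p q : nat) (hp : (2 <= p)%nat) (hq : (2 <= q)%nat)
  (M1 M2 : Vec -> Prop)
  (h1 : MinkPatchT p q M1) (h2 : MinkPatchT p q M2)
  (hne : exists w, M1 w /\ M2 w) :
  component_in (Etilde p q) (openEin p q)
    (piX p q (fun w => M1 w /\ M2 w))
    (fun w => piX p q M1 w /\ piX p q M2 w).
Proof.
 pose proof (proj1 h1) as HM1. pose proof (proj1 h2) as HM2.
 destruct (patch_char p q M1 hp hq h1) as [v1 [Hv1 C1]].
 destruct (patch_char p q M2 hp hq h2) as [v2 [Hv2 C2]].
 assert (CS : forall w, Etilde p q w -> (M1 w /\ M2 w <-> Sset p q v1 v2 w)).
 { intros w Ew. unfold Sset. rewrite C1, C2 by auto. tauto. }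
 destruct hne as [w0 [M1w0 M2w0]].
 assert (Ew0 : Etilde p q w0) by auto.
 split; [|split; [|split]].
 - intros w Ew [_ [[a b]|[a b]]]; split; split; auto.
 - exists w0; split; auto. split; auto.
 - intros [U [V [[SU OU] [[SV OV] [cov [dis [[a [Ea [Ca Ua]]] [b [Eb [Cb Vb]]]]]]]]]].
   apply (conn_S p q v1 v2 hp hq Hv1 Hv2). exists U, V.
   split; auto. split; auto. split; [|split; [|split]].
   + intros w Ew Sw. apply cov; auto. split; auto. left; apply CS; auto.
   + intros w Ew Sw. apply dis; auto. split; auto. left; apply CS; auto.
   + destruct Ca as [_ [Ca|Ca]].
     * exists a; split; [auto| split; [apply CS; auto| auto]].
     * exists (vneg a). split. apply Et_neg; auto. split. apply CS; auto. apply Et_neg; auto. apply SU; auto.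
   + destruct Cb as [_ [Cb|Cb]].
     * exists b; split; [auto| split; [apply CS; auto| auto]].
     * exists (vneg b). split. apply Et_neg; auto. split. apply CS; auto. apply Et_neg; auto. apply SV; auto.
 - intros D HD HCD HDY w Ew Dw.
   assert (NZ : forall x, Etilde p q x -> piX p q M1 x /\ piX p q M2 x ->
      Bform p q v1 x <> 0 /\ Bform p q v2 x <> 0).
   { intros x Ex [[_ m] [_ n]]. split.
     - destruct m as [m|m]; [apply (C1 x Ex) in m | apply (C1 (vneg x) (Et_neg p q x Ex)) in m; rewrite B_neg_r in m]; lra.
     - destruct n as [k|k]; [apply (C2 x Ex) in k | apply (C2 (vneg x) (Et_neg p q x Ex)) in k; rewrite B_neg_r in k]; lra. }
   destruct (NZ w Ew (HDY w Ew Dw)) as [n1 n2].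
   destruct (Rlt_le_dec 0 (Bform p q v1 w * Bform p q v2 w)) as [Hpos|Hneg].
   + split; auto. destruct (Rlt_le_dec 0 (Bform p q v1 w)).
     * left. apply CS; auto. split; auto. nra.
     * right. apply CS. apply Et_neg; auto. split; rewrite B_neg_r; nra.
   + exfalso. apply HD.
     exists (fun x => Etilde p q x /\ 0 < Bform p q v1 x * Bform p q v2 x),
            (fun x => Etilde p q x /\ Bform p q v1 x * Bform p q v2 x < 0).
     split; [|split; [|split; [|split; [|split]]]].
     * split. intros x [Ex h]; split. apply Et_neg; auto. rewrite !B_neg_r; nra. apply open_prod.
     * split. intros x [Ex h]; split. apply Et_neg; auto. rewrite !B_neg_r; nra. apply open_prod_neg.
     * intros x Ex Dx. destruct (NZ x Ex (HDY x Ex Dx)) as [m1 m2].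
       destruct (Rlt_le_dec 0 (Bform p q v1 x * Bform p q v2 x)). left; auto.
       right; split; auto. assert (Bform p q v1 x * Bform p q v2 x <> 0) by (apply Rmult_integral_contrapositive; auto). lra.
     * intros x _ _ [_ a] [_ b]; lra.
     * exists w0. split; auto. split. apply HCD; auto. split; auto.
       split; auto. destruct (proj1 (CS w0 Ew0) (conj M1w0 M2w0)). nra.
     * exists w. split; auto. split; auto. split; auto.
       assert (Bform p q v1 w * Bform p q v2 w <> 0) by (apply Rmult_integral_contrapositive; auto). lra.
Qed.
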